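(* Let $K$ be a field and $P$ an arbitrary poset. An idempotent $\alpha\in FI(P)$ is primitive if and only if there exist $x\in P$ and an invertible $\beta\in FI(P)$ with $\alpha=\beta^{-1}\delta_x^P\beta$. In particular, the diagonal primitive idempotents of $FI(P)$ are exactly the elements $\delta_x^P$, $x\in P$.
   Context: $K$ is a field, $P$ an arbitrary poset. $I(P)$ is the set of functions $\alpha$ assigning to each pair $x\le y$ in $P$ a value $\alpha(x,y)\in K$. An element $\alpha\in I(P)$ is a finitary series if for all $x<y$ in $P$ there are only finitely many pairs $(u,v)$ with $x\le u<v\le y$ and $\alpha(u,v)\neq0$; $FI(P)$ is the set of finitary series. $FI(P)$ is an associative $K$-algebra under pointwise addition and convolution $(\alpha\beta)(x,y)=\sum_{x\le z\le y}\alpha(x,z)\beta(z,y)$. An element is diagonal if $\alpha(x,y)=0$ for $x\ne y$. For $x\in P$, $\delta_x^P\in FI(P)$ is defined by $\delta_x^P(u,v)=1$ if $u=v=x$ and $0$ otherwise. A nonzero idempotent $\alpha$ is primitive if whenever $\varepsilon$ is an idempotent with $\alpha\varepsilon=\varepsilon\alpha=\alpha$ … the paper's definition: whenever $\varepsilon$ is an idempotent with $\varepsilon\alpha=\alpha\varepsilon=\varepsilon$, then $\varepsilon=0$ or $\varepsilon=\alpha$. *)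

(* Defs.v *)
From HB Require Import structures.
From mathcomp Require Import all_boot all_order all_algebra.
From Stdlib Require Import ClassicalEpsilon.
Set Implicit Arguments. Unset Strict Implicit. Unset Printing Implicit Defensive.
Import Order.Theory GRing.Theory.
Local Open Scope ring_scope.

Section FI.
Variables (d : Order.disp_t) (P : porderType d) (K : fieldType).

(* An element of I(P): values alpha x y for x <= y (values at other pairs
   are irrelevant; all comparisons below only look at pairs x <= y). *)
Definition ser := P -> P -> K.

Definition ser_eq (a b : ser) : Prop :=
  forall x y : P, (x <= y)%O -> a x y = b x y.

Definition finitary (a : ser) : Prop :=
  forall x y : P, (x < y)%O -> exists s : seq (P * P),
    forall u v : P, (x <= u)%O -> (u < v)%O -> (v <= y)%O -> a u v != 0 ->
      (u, v) \in s.

Definition conv_support (a b : ser) (x y : P) (s : seq P) : Prop :=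
  [/\ uniq s, all (fun z => (x <= z)%O && (z <= y)%O) s &
      forall z : P, (x <= z)%O -> (z <= y)%O -> a x z * b z y != 0 -> z \in s].

(* convolution (a b)(x,y) = sum_{x<=z<=y} a(x,z) b(z,y); the sum has finite
   support when a, b are finitary, and is computed over a chosen support. *)
Definition conv (a b : ser) : ser := fun x y =>
  let s := epsilon (inhabits [::]) (conv_support a b x y) in
  \sum_(z <- s) a x z * b z y.

Definition ser0 : ser := fun _ _ => 0.
Definition ser1 : ser := fun u v => if u == v then 1 else 0.
Definition delta (x : P) : ser := fun u v => if (u == x) && (v == x) then 1 else 0.

Definition diagonal (a : ser) : Prop := forall x y : P, x != y -> a x y = 0.

Definition fi_idempotent (a : ser) : Prop := finitary a /\ ser_eq (conv a a) a.

Definition fi_primitive (a : ser) : Prop :=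
  [/\ fi_idempotent a, ~ ser_eq a ser0 &
      forall e : ser, fi_idempotent e -> ser_eq (conv e a) e -> ser_eq (conv a e) e ->
        ser_eq e ser0 \/ ser_eq e a].

Definition inverse_of (b c : ser) : Prop :=
  [/\ finitary b, finitary c, ser_eq (conv b c) ser1 & ser_eq (conv c b) ser1].

End FI.

(* Main.v *)
Require Import Defs.
From HB Require Import structures.
From mathcomp Require Import all_boot all_order all_algebra.
From Stdlib Require Import Classical ClassicalEpsilon FunctionalExtensionality ProofIrrelevance.
Set Implicit Arguments. Unset Strict Implicit. Unset Printing Implicit Defensive.
Import Order.Theory GRing.Theory.
Local Open Scope ring_scope.


Section Basics.
Variables (d : Order.disp_t) (P : porderType d) (K : fieldType).
Implicit Types (a b c : ser P K) (x y z u v w : P).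

Lemma sum_nz_perm (F : P -> K) (s t : seq P) (Q : pred P) :
  uniq s -> uniq t -> (forall z, z \in s -> Q z) -> (forall z, z \in t -> Q z) ->
  (forall z, Q z -> F z != 0 -> (z \in s) && (z \in t)) ->
  \sum_(z <- s) F z = \sum_(z <- t) F z.
Proof.
move=> us ut Qs Qt cov.
have E r : \sum_(z <- r) F z = \sum_(z <- [seq z <- r | F z != 0]) F z.
  rewrite big_filter [LHS](bigID (fun z => F z != 0)) /= [X in _ + X]big1 ?addr0 //.
  by move=> z /negPn/eqP.
rewrite E [RHS]E; apply: perm_big; apply: uniq_perm; rewrite ?filter_uniq //.
move=> z; rewrite !mem_filter; apply/andP/andP => -[nz zin]; split=> //.
- by have /andP[] := cov z (Qs z zin) nz.
- by have /andP[] := cov z (Qt z zin) nz.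
Qed.

Lemma conv_sum a b x y (s : seq P) : uniq s ->
  (forall z, (x <= z)%O -> (z <= y)%O -> a x z * b z y != 0 -> z \in s) ->
  conv a b x y = \sum_(z <- s | (x <= z)%O && (z <= y)%O) a x z * b z y.
Proof.
move=> us cov.
have hs : conv_support a b x y [seq z <- s | (x <= z)%O && (z <= y)%O].
  split; first by rewrite filter_uniq.
  - by apply/allP => z; rewrite mem_filter => /andP[].
  - by move=> z h1 h2 h3; rewrite mem_filter h1 h2 cov.
rewrite /conv -[RHS]big_filter.
have [u0 a0 c0] : conv_support a b x y (epsilon (inhabits [::]) (conv_support a b x y)).
  by apply: epsilon_spec; eexists; exact: hs.
case: hs => u1 a1 c1.
apply: (@sum_nz_perm (fun z => a x z * b z y) _ _ (fun z => (x <= z)%O && (z <= y)%O)) => //.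
- by move=> z zin; move/allP: a0; apply.
- by move=> z zin; move/allP: a1; apply.
- by move=> z /andP[h1 h2] nz; rewrite c0 // c1.
Qed.

Lemma sum_nz_ex (T : eqType) (F : T -> K) (s : seq T) (Q : pred T) :
  \sum_(t <- s | Q t) F t != 0 -> exists t, [/\ t \in s, Q t & F t != 0].
Proof.
case: (boolP (has (fun t => Q t && (F t != 0)) s)) => [/hasP[t ts /andP[]]|].
  by move=> *; exists t.
rewrite -all_predC => /allP H; rewrite big1_seq ?eqxx // => t /andP[qt ts].
by have := H t ts; rewrite /= qt /= negbK => /eqP.
Qed.

Definition covers a x y (S : seq P) := forall u v, (x <= u)%O -> (u < v)%O ->
  (v <= y)%O -> a u v != 0 -> (u \in S) && (v \in S).

Lemma fin_cover a x y : finitary a -> exists S, covers a x y S.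
Proof.
move=> fa; case: (boolP (x < y)%O) => hxy.
  have [s Hs] := fa x y hxy.
  exists ([seq p.1 | p <- s] ++ [seq p.2 | p <- s]) => u v h1 h2 h3 h4.
  have hin := Hs u v h1 h2 h3 h4.
  by rewrite !mem_cat; apply/andP; split; apply/orP; [left|right];
    apply/mapP; exists (u, v).
exists [::] => u v h1 h2 h3 _; exfalso; move/negP: hxy; apply.
exact: le_lt_trans h1 (lt_le_trans h2 h3).
Qed.

Lemma covers_sub a x y x' y' S T : covers a x y S -> (x <= x')%O -> (y' <= y)%O ->
  {subset S <= T} -> covers a x' y' T.
Proof.
move=> H hx hy sub u v h1 h2 h3 h4.
have /andP[] := H u v (le_trans hx h1) h2 (le_trans h3 hy) h4.
by move=> /sub -> /sub ->.
Qed.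

Lemma cover_fin a : (forall x y, exists S, covers a x y S) -> finitary a.
Proof.
move=> H x y _; have [S HS] := H x y.
exists [seq (u, v) | u <- S, v <- S] => u v h1 h2 h3 h4.
by have /andP[us vs] := HS u v h1 h2 h3 h4; apply: allpairs_f.
Qed.

Lemma cover_left a x y S z : covers a x y S -> (x <= z)%O -> (z <= y)%O ->
  a x z != 0 -> z \in x :: S.
Proof.
move=> H h1 h2 h3; rewrite inE; case: (eqVneq z x) => //= ne.
have lt : (x < z)%O by rewrite lt_def ne.
by have /andP[] := H x z (lexx x) lt h2 h3.
Qed.

Lemma cover_right a x y S z : covers a x y S -> (x <= z)%O -> (z <= y)%O ->
  a z y != 0 -> z \in y :: S.
Proof.
move=> H h1 h2 h3; rewrite inE; case: (eqVneq z y) => //= ne.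
have lt : (z < y)%O by rewrite lt_def eq_sym ne.
by have /andP[] := H z y h1 lt (lexx y) h3.
Qed.

Lemma mul_nz (r t : K) : r * t != 0 -> (r != 0) && (t != 0).
Proof. by rewrite mulf_eq0 negb_or. Qed.

Lemma conv_suml a b x y S : covers a x y S ->
  conv a b x y = \sum_(z <- undup (x :: S) | (x <= z)%O && (z <= y)%O) a x z * b z y.
Proof.
move=> H; apply: conv_sum; first exact: undup_uniq.
move=> z h1 h2 /mul_nz/andP[h3 _]; rewrite mem_undup; exact: cover_left H h1 h2 h3.
Qed.

Lemma conv_sumr a b x y S : covers b x y S ->
  conv a b x y = \sum_(z <- undup (y :: S) | (x <= z)%O && (z <= y)%O) a x z * b z y.
Proof.
move=> H; apply: conv_sum; first exact: undup_uniq.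
move=> z h1 h2 /mul_nz/andP[_ h3]; rewrite mem_undup; exact: cover_right H h1 h2 h3.
Qed.

Lemma conv_nz a b u v : finitary a -> conv a b u v != 0 ->
  exists w, [/\ (u <= w)%O, (w <= v)%O, a u w != 0 & b w v != 0].
Proof.
move=> fa; have [S HS] := fin_cover u v fa; rewrite (conv_suml _ HS).
case/sum_nz_ex => w [_ /andP[h1 h2] /mul_nz/andP[h3 h4]]; by exists w.
Qed.

Lemma conv_nz_r a b u v : finitary b -> conv a b u v != 0 ->
  exists w, [/\ (u <= w)%O, (w <= v)%O, a u w != 0 & b w v != 0].
Proof.
move=> fb; have [S HS] := fin_cover u v fb; rewrite (conv_sumr _ HS).
case/sum_nz_ex => w [_ /andP[h1 h2] /mul_nz/andP[h3 h4]]; by exists w.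
Qed.

End Basics.


Section Alg.
Variables (d : Order.disp_t) (P : porderType d) (K : fieldType).
Implicit Types (a b c : ser P K) (x y z u v w : P).

Lemma sum_cond (L : seq P) (p : bool) (q : pred P) (G : P -> K) :
  (if p then \sum_(w <- L | q w) G w else 0) = \sum_(w <- L) (if p && q w then G w else 0).
Proof. by case: p => /=; [rewrite big_mkcond | rewrite big1]. Qed.

Lemma exch (L : seq P) (F : P -> P -> K) x y :
  \sum_(z <- L | (x <= z <= y)%O) \sum_(w <- L | (x <= w <= z)%O) F z w =
  \sum_(w <- L | (x <= w <= y)%O) \sum_(z <- L | (w <= z <= y)%O) F z w.
Proof.
rewrite big_mkcond [RHS]big_mkcond.
under eq_bigr do rewrite sum_cond.
under [RHS]eq_bigr do rewrite sum_cond.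
rewrite exchange_big; apply: eq_bigr => w _; apply: eq_bigr => z _.
have -> : ((x <= z <= y)%O && (x <= w <= z)%O) = ((x <= w <= y)%O && (w <= z <= y)%O) => //.
apply/andP/andP => -[/andP[h1 h2] /andP[h3 h4]]; split; apply/andP; split => //.
- exact: le_trans h4 h2.
- exact: le_trans h1 h3.
Qed.

Lemma convA a b c : finitary a -> finitary c ->
  ser_eq (conv (conv a b) c) (conv a (conv b c)).
Proof.
move=> fa fc x y hxy.
have [Sa Ha] := fin_cover x y fa; have [Sc Hc] := fin_cover x y fc.
set L := undup (x :: y :: Sa ++ Sc).
have uL : uniq L by exact: undup_uniq.
have inL1 z : z \in x :: Sa -> z \in L.
  by rewrite mem_undup !inE mem_cat => /orP[->|->]; rewrite ?orbT.
have inL2 z : z \in y :: Sc -> z \in L.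
  by rewrite mem_undup !inE mem_cat => /orP[->|->]; rewrite ?orbT.
rewrite (conv_sum uL); last first.
  move=> z h1 h2 /mul_nz/andP[_ h3]; apply: inL2; exact: cover_right Hc h1 h2 h3.
rewrite (conv_sum uL); last first.
  move=> z h1 h2 /mul_nz/andP[h3 _]; apply: inL1; exact: cover_left Ha h1 h2 h3.
transitivity (\sum_(z <- L | (x <= z <= y)%O) \sum_(w <- L | (x <= w <= z)%O)
                 a x w * b w z * c z y).
  apply: eq_bigr => z /andP[h1 h2]; rewrite (conv_sum uL) ?big_distrl //.
  move=> w k1 k2 /mul_nz/andP[k3 _]; apply: inL1.
  exact: cover_left Ha k1 (le_trans k2 h2) k3.
rewrite exch; apply: eq_bigr => w /andP[h1 h2].
rewrite (conv_sum uL) ?big_distrr; last first.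
  move=> z k1 k2 /mul_nz/andP[_ k3]; apply: inL2.
  exact: cover_right Hc (le_trans h1 k1) k2 k3.
by apply: eq_bigr => z _; symmetry; exact: mulrA.
Qed.

Lemma covers_eq a a' x y S : ser_eq a a' -> covers a x y S -> covers a' x y S.
Proof. by move=> E H u v h1 h2 h3; rewrite -E ?(ltW h2) //; apply: H. Qed.

Lemma fin_eq a a' : ser_eq a a' -> finitary a -> finitary a'.
Proof.
move=> E fa; apply: cover_fin => x y; have [S HS] := fin_cover x y fa.
by exists S; apply: covers_eq E HS.
Qed.

Lemma ser_eq_sym a b : ser_eq a b -> ser_eq b a.
Proof. by move=> E x y h; rewrite E. Qed.

Lemma ser_eq_trans a b c : ser_eq a b -> ser_eq b c -> ser_eq a c.
Proof. by move=> E F x y h; rewrite E ?F. Qed.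

Lemma conv_ext a a' b b' : finitary a -> ser_eq a a' -> ser_eq b b' ->
  ser_eq (conv a b) (conv a' b').
Proof.
move=> fa Ea Eb x y hxy; have [S HS] := fin_cover x y fa.
rewrite (conv_suml _ HS) (conv_suml _ (covers_eq Ea HS)).
by apply: eq_bigr => z /andP[h1 h2]; rewrite Ea ?Eb.
Qed.

Lemma conv_fin a b : finitary a -> finitary b -> finitary (conv a b).
Proof.
move=> fa fb; apply: cover_fin => x y.
have [Sa Ha] := fin_cover x y fa; have [Sb Hb] := fin_cover x y fb.
exists (Sa ++ Sb) => u v h1 h2 h3 nz.
have [w [k1 k2 k3 k4]] := conv_nz fa nz.
have hxw : (x <= w)%O := le_trans h1 k1.
have hwy : (w <= y)%O := le_trans k2 h3.
rewrite !mem_cat; apply/andP; split.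
  case: (eqVneq w u) => [ewu|nwu].
    subst w; have /andP[-> _] := Hb u v h1 h2 h3 k4; by rewrite orbT.
  have ltu : (u < w)%O by rewrite lt_def nwu.
  by have /andP[-> _] := Ha u w h1 ltu hwy k3.
case: (eqVneq w v) => [ewv|nwv].
  subst w; by have /andP[_ ->] := Ha u v h1 h2 h3 k3.
have ltv : (w < v)%O by rewrite lt_def eq_sym nwv.
have /andP[_ ->] := Hb w v hxw ltv h3 k4; by rewrite orbT.
Qed.

Definition addS a b : ser P K := fun x y => a x y + b x y.
Definition oppS a : ser P K := fun x y => - a x y.

Lemma covers_add a b x y S T : covers a x y S -> covers b x y T ->
  covers (addS a b) x y (S ++ T).
Proof.
move=> Ha Hb u v h1 h2 h3 nz; rewrite !mem_cat.
case: (eqVneq (a u v) 0) => [e|na].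
  move: nz; rewrite /addS e add0r => nb.
  by have /andP[-> ->] := Hb u v h1 h2 h3 nb; rewrite !orbT.
by have /andP[-> ->] := Ha u v h1 h2 h3 na.
Qed.

Lemma add_fin a b : finitary a -> finitary b -> finitary (addS a b).
Proof.
move=> fa fb; apply: cover_fin => x y.
have [Sa Ha] := fin_cover x y fa; have [Sb Hb] := fin_cover x y fb.
by exists (Sa ++ Sb); apply: covers_add.
Qed.

Lemma opp_fin a : finitary a -> finitary (oppS a).
Proof.
move=> fa; apply: cover_fin => x y; have [S HS] := fin_cover x y fa.
by exists S => u v h1 h2 h3; rewrite /oppS oppr_eq0; apply: HS.
Qed.

Lemma covers_app a x y S T : covers a x y S -> covers a x y (S ++ T).
Proof. by move=> H; apply: covers_sub H _ _ _ => // z; rewrite mem_cat => ->. Qed.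

Lemma covers_app2 a x y S T : covers a x y T -> covers a x y (S ++ T).
Proof. by move=> H; apply: covers_sub H _ _ _ => // z; rewrite mem_cat => ->; rewrite orbT. Qed.

Lemma conv_addl a b c : finitary a -> finitary b ->
  ser_eq (conv (addS a b) c) (addS (conv a c) (conv b c)).
Proof.
move=> fa fb x y hxy.
have [Sa Ha] := fin_cover x y fa; have [Sb Hb] := fin_cover x y fb.
rewrite /addS (conv_suml _ (covers_add Ha Hb)) (conv_suml _ (covers_app Sb Ha))
  (conv_suml _ (covers_app2 Sa Hb)) -big_split.
by apply: eq_bigr => z _; rewrite mulrDl.
Qed.

Lemma conv_addr a b c : finitary a ->
  ser_eq (conv a (addS b c)) (addS (conv a b) (conv a c)).
Proof.
move=> fa x y hxy; have [Sa Ha] := fin_cover x y fa.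
rewrite /addS !(conv_suml _ Ha) -big_split.
by apply: eq_bigr => z _; rewrite mulrDr.
Qed.

Lemma conv1l a : ser_eq (conv (ser1 K) a) a.
Proof.
move=> x y hxy; rewrite (conv_sum (s := [:: x])) //.
  by rewrite big_cons big_nil lexx hxy /ser1 eqxx mul1r addr0.
move=> z _ _ /mul_nz/andP[h _]; move: h; rewrite /ser1 inE.
by case: (eqVneq x z); rewrite ?eqxx ?oner_eq0.
Qed.

Lemma conv1r a : ser_eq (conv a (ser1 K)) a.
Proof.
move=> x y hxy; rewrite (conv_sum (s := [:: y])) //.
  by rewrite big_cons big_nil lexx hxy /ser1 eqxx mulr1 addr0.
move=> z _ _ /mul_nz/andP[_ h]; move: h; rewrite /ser1 inE.
by case: (eqVneq z y); rewrite ?eqxx ?oner_eq0.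
Qed.

Lemma conv_diag a b x : conv a b x x = a x x * b x x.
Proof.
rewrite (conv_sum (s := [:: x])) //.
  by rewrite big_cons big_nil lexx addr0.
by move=> z h1 h2 _; rewrite inE eq_le h1 h2.
Qed.



Lemma conv_delta_l x0 a u v : (u <= v)%O ->
  conv (delta K x0) a u v = if u == x0 then a x0 v else 0.
Proof.
move=> huv; rewrite (conv_sum (s := [:: u])) //.
  rewrite big_cons big_nil lexx huv addr0 /delta.
  by case: (eqVneq u x0) => [->|]; rewrite ?eqxx ?mul1r ?mul0r.
move=> z _ _ /mul_nz/andP[h _]; move: h; rewrite /delta inE.
by case: (eqVneq u x0) => [->|_]; case: (eqVneq z x0) => [_|_] /=; rewrite ?eqxx ?oner_eq0 //=.
Qed.

Lemma conv_delta_r x0 a u v : (u <= v)%O ->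
  conv a (delta K x0) u v = if v == x0 then a u x0 else 0.
Proof.
move=> huv; rewrite (conv_sum (s := [:: v])) //.
  rewrite big_cons big_nil lexx huv addr0 /delta.
  by case: (eqVneq v x0) => [->|]; rewrite ?eqxx ?mulr1 ?mulr0.
move=> z _ _ /mul_nz/andP[_ h]; move: h; rewrite /delta inE.
by case: (eqVneq v x0) => [->|_]; case: (eqVneq z x0) => [_|_] /=; rewrite ?eqxx ?oner_eq0 //=.
Qed.

End Alg.


Section FIring.
Variables (d : Order.disp_t) (P : porderType d) (K : fieldType).
Implicit Types (a b c : ser P K) (x y z u v w : P).

Definition normal (a : ser P K) := forall x y, ~~ (x <= y)%O -> a x y = 0.
Record fi := FI { fval : ser P K; fvalP : finitary fval /\ normal fval }.

Definition nrm a : ser P K := fun x y => if (x <= y)%O then a x y else 0.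
Lemma nrm_eq a : ser_eq (nrm a) a. Proof. by move=> x y h; rewrite /nrm h. Qed.
Lemma nrm_normal a : normal (nrm a). Proof. by move=> x y /negbTE h; rewrite /nrm h. Qed.
Definition mkfi a (h : finitary a) : fi :=
  @FI (nrm a) (conj (fin_eq (ser_eq_sym (nrm_eq a)) h) (nrm_normal a)).
Lemma mkfiE a (h : finitary a) : ser_eq (fval (mkfi h)) a.
Proof. exact: nrm_eq. Qed.

Lemma fi_ext (p q : fi) : ser_eq (fval p) (fval q) -> p = q.
Proof.
case: p q => [p [fp np]] [q [fq nq]] /= E.
have epq : p = q.
  apply: functional_extensionality => x; apply: functional_extensionality => y.
  by case: (boolP (x <= y)%O) => h; [exact: E | rewrite np ?nq].
subst q; congr FI; apply: proof_irrelevance.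
Qed.

Lemma fin (p : fi) : finitary (fval p). Proof. exact: (fvalP p).1. Qed.

Definition fi_eqb (p q : fi) : bool :=
  if excluded_middle_informative (p = q) then true else false.
Lemma fi_eqP : Equality.axiom fi_eqb.
Proof. by move=> p q; rewrite /fi_eqb; case: excluded_middle_informative => h; constructor. Qed.
HB.instance Definition _ := hasDecEq.Build fi fi_eqP.

Definition fi_find (Q : pred fi) (n : nat) : option fi :=
  match excluded_middle_informative (exists f, Q f) with
  | left h => Some (proj1_sig (constructive_indefinite_description _ h))
  | right _ => None end.
Lemma fi_find1 (Q : pred fi) n (f : fi) : fi_find Q n = Some f -> Q f.
Proof.
rewrite /fi_find; case: excluded_middle_informative => // h [<-].
exact: (proj2_sig (constructive_indefinite_description _ h)).
Qed.
Lemma fi_find2 (Q : pred fi) : (exists f, Q f) -> exists n, fi_find Q n.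
Proof. by move=> h; exists 0%N; rewrite /fi_find; case: excluded_middle_informative. Qed.
Lemma fi_find3 (Q R : pred fi) : Q =1 R -> fi_find Q =1 fi_find R.
Proof.
move=> E; have -> // : Q = R by apply: functional_extensionality.
Qed.
HB.instance Definition _ := @hasChoice.Build fi fi_find fi_find1 fi_find2 fi_find3.

Lemma ser0_fin : finitary (@ser0 _ P K).
Proof. by apply: cover_fin => x y; exists [::] => u v _ _ _; rewrite eqxx. Qed.
Lemma ser1_fin : finitary (@ser1 _ P K).
Proof.
apply: cover_fin => x y; exists [::] => u v _ h _; rewrite /ser1.
by rewrite (lt_eqF h) eqxx.
Qed.
Lemma delta_fin x0 : finitary (delta K x0).
Proof.
apply: cover_fin => x y; exists [::] => u v _ h _; rewrite /delta.
case: (eqVneq u x0) => [eu|] //=; case: (eqVneq v x0) => [ev|] //=; rewrite ?eqxx //.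
by move: h; rewrite eu ev ltxx.
Qed.

Definition fzero := mkfi ser0_fin.
Definition fone := mkfi ser1_fin.
Definition fadd (p q : fi) := mkfi (add_fin (fin p) (fin q)).
Definition fopp (p : fi) := mkfi (opp_fin (fin p)).
Definition fmul (p q : fi) := mkfi (conv_fin (fin p) (fin q)).

Lemma faddE p q x y : (x <= y)%O -> fval (fadd p q) x y = fval p x y + fval q x y.
Proof. by move=> h; rewrite (mkfiE _ h). Qed.
Lemma foppE p x y : (x <= y)%O -> fval (fopp p) x y = - fval p x y.
Proof. by move=> h; rewrite (mkfiE _ h). Qed.
Lemma fzeroE x y : (x <= y)%O -> fval fzero x y = 0.
Proof. by move=> h; rewrite (mkfiE _ h). Qed.
Lemma foneE x y : (x <= y)%O -> fval fone x y = @ser1 _ P K x y.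
Proof. by move=> h; rewrite (mkfiE _ h). Qed.
Lemma fmulE p q : ser_eq (fval (fmul p q)) (conv (fval p) (fval q)).
Proof. exact: mkfiE. Qed.

Lemma faddA : associative fadd.
Proof. by move=> p q r; apply: fi_ext => x y h; rewrite !faddE // addrA. Qed.
Lemma faddC : commutative fadd.
Proof. by move=> p q; apply: fi_ext => x y h; rewrite !faddE // addrC. Qed.
Lemma fadd0 : left_id fzero fadd.
Proof. by move=> p; apply: fi_ext => x y h; rewrite !faddE // fzeroE // add0r. Qed.
Lemma faddN : left_inverse fzero fopp fadd.
Proof. by move=> p; apply: fi_ext => x y h; rewrite !faddE // foppE // fzeroE // addNr. Qed.

HB.instance Definition _ := GRing.isZmodule.Build fi faddA faddC fadd0 faddN.

Lemma ser_eq_refl (a : ser P K) : ser_eq a a. Proof. by []. Qed.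

Lemma fmulA : associative fmul.
Proof.
move=> p q r; apply: fi_ext.
apply: ser_eq_sym; apply: (ser_eq_trans (fmulE (fmul p q) r)).
apply: (ser_eq_trans (conv_ext (fin _) (fmulE p q) (ser_eq_refl (fval r)))).
apply: (ser_eq_trans (convA (fval q) (fin p) (fin r))).
apply: ser_eq_sym; apply: (ser_eq_trans (fmulE p (fmul q r))).
exact: (conv_ext (fin p) (ser_eq_refl _) (fmulE q r)).
Qed.

Lemma fmul1 : left_id fone fmul.
Proof.
move=> p; apply: fi_ext.
apply: (ser_eq_trans (fmulE _ _)).
apply: (ser_eq_trans (conv_ext (fin _) (mkfiE ser1_fin) (ser_eq_refl (fval p)))).
exact: conv1l.
Qed.

Lemma fmulr1 : right_id fone fmul.
Proof.
move=> p; apply: fi_ext.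
apply: (ser_eq_trans (fmulE _ _)).
apply: (ser_eq_trans (conv_ext (fin p) (ser_eq_refl _) (mkfiE ser1_fin))).
exact: conv1r.
Qed.

Lemma addS_ext a a' b b' : ser_eq a a' -> ser_eq b b' -> ser_eq (addS a b) (addS a' b').
Proof. by move=> E F x y h; rewrite /addS E ?F. Qed.

Lemma fmulDl : left_distributive fmul fadd.
Proof.
move=> p q r; apply: fi_ext.
apply: (ser_eq_trans (fmulE _ _)).
apply: (ser_eq_trans (conv_ext (fin _) (mkfiE (add_fin (fin p) (fin q))) (ser_eq_refl (fval r)))).
apply: (ser_eq_trans (conv_addl (fval r) (fin p) (fin q))).
apply: ser_eq_sym; apply: (ser_eq_trans (mkfiE _)).
exact: addS_ext (fmulE _ _) (fmulE _ _).
Qed.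

Lemma fmulDr : right_distributive fmul fadd.
Proof.
move=> p q r; apply: fi_ext.
apply: (ser_eq_trans (fmulE _ _)).
apply: (ser_eq_trans (conv_ext (fin p) (ser_eq_refl _) (mkfiE (add_fin (fin q) (fin r))))).
apply: (ser_eq_trans (conv_addr (fval q) (fval r) (fin p))).
apply: ser_eq_sym; apply: (ser_eq_trans (mkfiE _)).
exact: addS_ext (fmulE _ _) (fmulE _ _).
Qed.

HB.instance Definition _ := GRing.Zmodule_isPzRing.Build fi fmulA fmul1 fmulr1 fmulDl fmulDr.

Lemma mulE (p q : fi) : ser_eq (fval (p * q)) (conv (fval p) (fval q)).
Proof. exact: fmulE. Qed.
Lemma addE (p q : fi) x y : (x <= y)%O -> fval (p + q) x y = fval p x y + fval q x y.
Proof. exact: faddE. Qed.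
Lemma oppE (p : fi) x y : (x <= y)%O -> fval (- p) x y = - fval p x y.
Proof. exact: foppE. Qed.
Lemma subE (p q : fi) x y : (x <= y)%O -> fval (p - q) x y = fval p x y - fval q x y.
Proof. by move=> h; rewrite addE // oppE. Qed.
Lemma zeroE x y : (x <= y)%O -> fval (0 : fi) x y = 0.
Proof. exact: fzeroE. Qed.
Lemma oneE x y : (x <= y)%O -> fval (1 : fi) x y = @ser1 _ P K x y.
Proof. exact: foneE. Qed.

End FIring.


Lemma count_lt (T : eqType) (p q : pred T) (s : seq T) (w : T) :
  (forall t, p t -> q t) -> w \in s -> q w -> ~~ p w -> (count p s < count q s)%N.
Proof.
move=> pq; elim: s => // a s IH; rewrite inE => /orP[/eqP <-|ws] qw npw /=.
  rewrite qw (negbTE npw) add0n add1n ltnS; exact: sub_count.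
have h := IH ws qw npw; rewrite -(ltn_add2l (p a)) in h.
apply: leq_trans h _; rewrite leq_add2r.
by case: (p a) (pq a) => // ->.
Qed.

Lemma sum_trunc (K : nmodType) m n (f : nat -> K) :
  (forall k, (m <= k)%N -> f k = 0) -> (forall k, (n <= k)%N -> f k = 0) ->
  \sum_(0 <= k < m) f k = \sum_(0 <= k < n) f k.
Proof.
have gen m' n' : (m' <= n')%N -> (forall k, (m' <= k)%N -> f k = 0) ->
    \sum_(0 <= k < m') f k = \sum_(0 <= k < n') f k.
  move=> le H; rewrite [RHS](big_cat_nat (leq0n m') le) /=.
  rewrite [X in _ = _ + X]big_nat_cond [X in _ = _ + X]big1 ?addr0 // => k /andP[/andP[hk _] _].
  exact: H.
move=> Hm Hn; case: (leqP m n) => h; first exact: gen.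
by symmetry; apply: gen => //; apply: ltnW.
Qed.

Section Inv.
Variables (d : Order.disp_t) (P : porderType d) (K : fieldType).
Implicit Types (a b c : ser P K) (x y z u v w : P).
Local Notation fi := (fi P K).

Lemma fval_exprS (p : fi) k : ser_eq (fval (p ^+ k.+1)) (conv (fval p) (fval (p ^+ k))).
Proof. by rewrite exprS; apply: mulE. Qed.
Lemma fval_exprSr (p : fi) k : ser_eq (fval (p ^+ k.+1)) (conv (fval (p ^+ k)) (fval p)).
Proof. by rewrite exprSr; apply: mulE. Qed.

Lemma ser1_xx x : @ser1 _ P K x x = 1. Proof. by rewrite /ser1 eqxx. Qed.
Lemma ser1_ne x y : x != y -> @ser1 _ P K x y = 0. Proof. by rewrite /ser1 => /negbTE ->. Qed.

Section Nu.
Variable nu : fi.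
Hypothesis nu0 : forall x, fval nu x x = 0.

Lemma van x y S : covers (fval nu) x y S -> forall k u v, (x <= u)%O -> (u <= v)%O ->
  (v <= y)%O -> fval (nu ^+ k) u v != 0 ->
  (k <= count (fun t => (u < t)%O && (t <= v)%O) (undup S))%N.
Proof.
move=> HS; elim=> // k IH u v h1 h2 h3 nz.
rewrite (fval_exprS _ _ h2) in nz.
have [w [k1 k2 k3 k4]] := conv_nz (fin nu) nz.
have nwu : w != u by apply: contraNneq k3 => ->; rewrite nu0.
have ltu : (u < w)%O by rewrite lt_def nwu.
have hxw : (x <= w)%O := le_trans h1 k1.
have le1 := IH w v hxw k2 h3 k4; apply: leq_ltn_trans le1 _.
apply: count_lt (w) _ _ _ _.
- by move=> t /andP[h4 h5]; rewrite h5 (lt_trans ltu h4).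
- by rewrite mem_undup; have /andP[] := HS u w h1 ltu (le_trans k2 h3) k3.
- by rewrite ltu k2.
- by rewrite ltxx.
Qed.

Lemma vanish x y S k u v : covers (fval nu) x y S -> (x <= u)%O -> (u <= v)%O ->
  (v <= y)%O -> (size (undup S) < k)%N -> fval (nu ^+ k) u v = 0.
Proof.
move=> HS h1 h2 h3 hk; apply/eqP; apply: contraTT hk => nz; rewrite -leqNgt.
apply: leq_trans (van HS h1 h2 h3 nz) _; exact: count_size.
Qed.

Definition Mb x y : nat :=
  epsilon (inhabits 0%N) (fun m => forall k, (m <= k)%N -> fval (nu ^+ k) x y = 0).
Definition gam : ser P K := fun x y => \sum_(0 <= k < Mb x y) fval (nu ^+ k) x y.

Lemma gamE x y n : (forall k, (n <= k)%N -> fval (nu ^+ k) x y = 0) ->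
  gam x y = \sum_(0 <= k < n) fval (nu ^+ k) x y.
Proof.
move=> H; have hM : forall k, (Mb x y <= k)%N -> fval (nu ^+ k) x y = 0.
  by apply: (epsilon_spec (inhabits 0%N) (fun m => forall k, (m <= k)%N -> _)); exists n.
exact: sum_trunc.
Qed.

Lemma gam_fin : finitary gam.
Proof.
apply: cover_fin => x y; have [S HS] := fin_cover x y (fin nu).
exists S => u v h1 h2 h3 nz.
have huv := ltW h2.
rewrite (@gamE u v (size (undup S)).+1) in nz; last first.
  by move=> k hk; apply: (vanish HS).
have [[|k] [_ _ nzk]] := sum_nz_ex nz.
  by move: nzk; rewrite expr0 oneE // ser1_ne ?eqxx // (lt_eqF h2).
apply/andP; split.
  rewrite (fval_exprS _ _ huv) in nzk.
  have [w [k1 k2 k3 k4]] := conv_nz (fin nu) nzk.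
  have nwu : w != u by apply: contraNneq k3 => ->; rewrite nu0.
  have ltu : (u < w)%O by rewrite lt_def nwu.
  by have /andP[] := HS u w h1 ltu (le_trans k2 h3) k3.
rewrite (fval_exprSr _ _ huv) in nzk.
have [w [k1 k2 k3 k4]] := conv_nz (fin _) nzk.
have nwv : w != v by apply: contraNneq k4 => ->; rewrite nu0.
have ltv : (w < v)%O by rewrite lt_def eq_sym nwv.
by have /andP[] := HS w v (le_trans h1 k1) ltv h3 k4.
Qed.

Definition gamma : fi := mkfi gam_fin.

Lemma nu_gamma : nu * gamma = gamma - 1.
Proof.
apply: fi_ext => x y hxy.
have [S HS] := fin_cover x y (fin nu).
set N := (size (undup S)).+1.
rewrite (mulE _ _ hxy) (conv_ext (fin nu) (ser_eq_refl _) (mkfiE gam_fin) hxy).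
rewrite (conv_suml _ HS).
rewrite subE // (mkfiE gam_fin hxy) oneE //.
rewrite (@gamE x y N.+1); last first.
  by move=> k hk; apply: (vanish HS) => //; apply: ltnW.
rewrite big_nat_recl // expr0 oneE // addrAC subrr add0r.
transitivity (\sum_(w <- undup (x :: S) | (x <= w <= y)%O)
                \sum_(0 <= k < N) fval nu x w * fval (nu ^+ k) w y).
  apply: eq_bigr => w /andP[h1 h2]; rewrite (@gamE w y N) ?big_distrr //.
  by move=> k hk; apply: (vanish HS).
rewrite exchange_big; apply: eq_bigr => k _.
by rewrite (fval_exprS _ _ hxy) (conv_suml _ HS).
Qed.

Lemma gamma_nu : gamma * nu = gamma - 1.
Proof.
apply: fi_ext => x y hxy.
have [S HS] := fin_cover x y (fin nu).
set N := (size (undup S)).+1.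
rewrite (mulE _ _ hxy) (conv_ext (fin gamma) (mkfiE gam_fin) (ser_eq_refl _) hxy).
rewrite (conv_sumr _ HS).
rewrite subE // (mkfiE gam_fin hxy) oneE //.
rewrite (@gamE x y N.+1); last first.
  by move=> k hk; apply: (vanish HS) => //; apply: ltnW.
rewrite big_nat_recl // expr0 oneE // addrAC subrr add0r.
transitivity (\sum_(w <- undup (y :: S) | (x <= w <= y)%O)
                \sum_(0 <= k < N) fval (nu ^+ k) x w * fval nu w y).
  apply: eq_bigr => w /andP[h1 h2]; rewrite (@gamE x w N) ?big_distrl //.
  by move=> k hk; apply: (vanish HS).
rewrite exchange_big; apply: eq_bigr => k _.
by rewrite (fval_exprSr _ _ hxy) (conv_sumr _ HS).
Qed.

End Nu.

Lemma unipotent_inv (p : fi) : (forall x, fval p x x = 1) ->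
  exists q : fi, p * q = 1 /\ q * p = 1.
Proof.
move=> H; set nu := 1 - p.
have nu0 : forall x, fval nu x x = 0 by move=> x; rewrite subE // oneE // ser1_xx H subrr.
have ep : p = 1 - nu by rewrite /nu opprB addrC subrK.
exists (gamma nu0); split.
  by rewrite ep mulrBl mul1r nu_gamma opprB addrC subrK.
by rewrite ep mulrBr mulr1 gamma_nu opprB addrC subrK.
Qed.

End Inv.


Section Main.
Variables (d : Order.disp_t) (P : porderType d) (K : fieldType).
Implicit Types (a b c : ser P K) (x y z u v w : P).
Local Notation fi := (fi P K).

Definition dgS a : ser P K := fun x y => if x == y then a x x else 0.
Lemma dg_fin a : finitary (dgS a).
Proof.
apply: cover_fin => x y; exists [::] => u v _ h _; rewrite /dgS.
by rewrite (lt_eqF h) eqxx.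
Qed.
Definition dg (p : fi) : fi := mkfi (dg_fin (fval p)).
Definition Dl x : fi := mkfi (delta_fin K x).

Lemma dgE p u v : (u <= v)%O -> fval (dg p) u v = if u == v then fval p u u else 0.
Proof. by move=> h; rewrite (mkfiE _ h). Qed.
Lemma DlE x u v : (u <= v)%O -> fval (Dl x) u v = delta K x u v.
Proof. by move=> h; rewrite (mkfiE _ h). Qed.

Lemma mul_xx (p q : fi) x : fval (p * q) x x = fval p x x * fval q x x.
Proof. by rewrite (mulE _ _ (lexx x)) conv_diag. Qed.

Lemma liftmul (p q : fi) a b : ser_eq (fval p) a -> ser_eq (fval q) b ->
  ser_eq (fval (p * q)) (conv a b).
Proof. move=> E F; apply: ser_eq_trans (mulE p q) _; exact: conv_ext (fin p) E F. Qed.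

Lemma DlL x (p : fi) u v : (u <= v)%O ->
  fval (Dl x * p) u v = if u == x then fval p x v else 0.
Proof.
move=> h; rewrite (liftmul (mkfiE (delta_fin K x)) (ser_eq_refl (fval p)) h).
exact: conv_delta_l.
Qed.

Lemma DlR x (p : fi) u v : (u <= v)%O ->
  fval (p * Dl x) u v = if v == x then fval p u x else 0.
Proof.
move=> h; rewrite (liftmul (ser_eq_refl (fval p)) (mkfiE (delta_fin K x)) h).
exact: conv_delta_r.
Qed.

Lemma Dl_id x (p : fi) : (forall u v, (u <= v)%O -> u != v -> fval p u v = 0) ->
  fval p x x = 1 -> Dl x * p = Dl x /\ p * Dl x = Dl x.
Proof.
move=> dp px; split; apply: fi_ext => u v h; rewrite ?DlL ?DlR // DlE // /delta.
- case: (eqVneq u x) => [eu|] //=; subst u.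
  by case: (eqVneq v x) => [ev|nv]; [subst v; rewrite px | rewrite dp // eq_sym].
- case: (eqVneq v x) => [ev|] //=; rewrite ?andbF //; subst v; rewrite andbT.
  by case: (eqVneq u x) => [eu|nu]; [subst u; rewrite px | rewrite dp].
Qed.

Lemma Dl_xx x : fval (Dl x) x x = 1.
Proof. by rewrite DlE // /delta eqxx. Qed.

Lemma Dl_nz x : Dl x != 0.
Proof.
apply/eqP => E; have := Dl_xx x; rewrite E zeroE // => /eqP; by rewrite eq_sym oner_eq0.
Qed.

Lemma Dl_idem x : Dl x * Dl x = Dl x.
Proof.
apply: (proj1 (Dl_id _ _)); last exact: Dl_xx.
move=> u v h ne; rewrite DlE // /delta.
by case: (eqVneq u x) => [eu|] //=; case: (eqVneq v x) => [ev|] //=; move: ne; rewrite eu ev eqxx.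
Qed.

Lemma sandwich x (F : fi) : Dl x * F = F -> F * Dl x = F -> F * F = F ->
  F = 0 \/ F = Dl x.
Proof.
move=> hl hr hff.
have Fuv u v : (u <= v)%O -> fval F u v = if (u == x) && (v == x) then fval F x x else 0.
  move=> h; have -> : fval F u v = fval (Dl x * (F * Dl x)) u v by rewrite hr hl.
  rewrite DlL //; case: (eqVneq u x) => [eu|] //; subst u.
  by rewrite DlR.
have tt : fval F x x * fval F x x = fval F x x by rewrite -mul_xx hff.
case: (eqVneq (fval F x x) 0) => [t0|tn]; [left | right].
  by apply: fi_ext => u v h; rewrite Fuv // zeroE // t0; case: ifP.
have t1 : fval F x x = 1 by apply: (mulfI tn); rewrite tt mulr1.
by apply: fi_ext => u v h; rewrite Fuv // DlE // /delta t1.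
Qed.


Lemma dgL (p q : fi) u v : (u <= v)%O -> fval (dg p * q) u v = fval p u u * fval q u v.
Proof.
move=> h; rewrite (mulE _ _ h) (conv_sum (s := [:: u])) //.
  by rewrite big_cons big_nil lexx h addr0 dgE // eqxx.
move=> z h1 h2 /mul_nz/andP[nz _]; move: nz; rewrite dgE // inE eq_sym.
by case: (eqVneq z u) => //=; rewrite eqxx.
Qed.

Lemma idem_ring a (fa : finitary a) : ser_eq (conv a a) a -> mkfi fa * mkfi fa = mkfi fa.
Proof.
move=> E; apply: fi_ext; apply: ser_eq_trans (liftmul (mkfiE fa) (mkfiE fa)) _.
apply: ser_eq_trans E _; apply: ser_eq_sym; exact: mkfiE.
Qed.

Lemma ring_idem (p : fi) : p * p = p -> ser_eq (conv (fval p) (fval p)) (fval p).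
Proof. move=> E; apply: ser_eq_trans (ser_eq_sym (mulE p p)) _; by rewrite E. Qed.

Lemma prim_ring a (fa : finitary a) : fi_primitive a ->
  [/\ mkfi fa * mkfi fa = mkfi fa, mkfi fa != 0 &
      forall e : fi, e * e = e -> e * mkfi fa = e -> mkfi fa * e = e ->
        e = 0 \/ e = mkfi fa].
Proof.
case=> [[_ ia] nz pr]; split.
- exact: idem_ring.
- apply/eqP => E; apply: nz; apply: ser_eq_trans (ser_eq_sym (mkfiE fa)) _.
  by rewrite E => x y h; rewrite zeroE.
- move=> e ee ea ae.
  have H1 : fi_idempotent (fval e) by split; [exact: fin | exact: ring_idem].
  have H2 : ser_eq (conv (fval e) a) (fval e).
    apply: ser_eq_trans (ser_eq_sym (liftmul (ser_eq_refl (fval e)) (mkfiE fa))) _.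
    by rewrite ea.
  have H3 : ser_eq (conv a (fval e)) (fval e).
    apply: ser_eq_trans (ser_eq_sym (liftmul (mkfiE fa) (ser_eq_refl (fval e)))) _.
    by rewrite ae.
  case: (pr _ H1 H2 H3) => E; [left|right]; apply: fi_ext.
  + by move=> x y h; rewrite E // zeroE.
  + apply: ser_eq_trans E _; exact: ser_eq_sym (mkfiE fa).
Qed.

Lemma ring_prim a (fa : finitary a) : mkfi fa * mkfi fa = mkfi fa -> mkfi fa != 0 ->
  (forall e : fi, e * e = e -> e * mkfi fa = e -> mkfi fa * e = e ->
     e = 0 \/ e = mkfi fa) ->
  fi_primitive a.
Proof.
move=> aa anz pr; split.
- split=> //; apply: ser_eq_trans (ser_eq_sym (liftmul (mkfiE fa) (mkfiE fa))) _.
  rewrite aa; exact: mkfiE.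
- move=> E; move/eqP: anz; apply; apply: fi_ext.
  apply: ser_eq_trans (mkfiE fa) _; apply: ser_eq_trans E _.
  by move=> x y h; rewrite zeroE.
- move=> e [fe ie] ea ae.
  have EE : mkfi fe * mkfi fe = mkfi fe := idem_ring fe ie.
  have Ea : mkfi fe * mkfi fa = mkfi fe.
    apply: fi_ext; apply: ser_eq_trans (liftmul (mkfiE fe) (mkfiE fa)) _.
    apply: ser_eq_trans ea _; exact: ser_eq_sym (mkfiE fe).
  have aE : mkfi fa * mkfi fe = mkfi fe.
    apply: fi_ext; apply: ser_eq_trans (liftmul (mkfiE fa) (mkfiE fe)) _.
    apply: ser_eq_trans ae _; exact: ser_eq_sym (mkfiE fe).
  case: (pr _ EE Ea aE) => H; [left|right];
    apply: ser_eq_trans (ser_eq_sym (mkfiE fe)) _; rewrite H.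
  + by move=> x y h; rewrite zeroE.
  + exact: mkfiE.
Qed.

Lemma part1_dir a (fa : finitary a) : fi_primitive a ->
  exists (x : P) (b binv : ser P K),
    inverse_of b binv /\ ser_eq a (conv (conv binv (delta K x)) b).
Proof.
move=> pa; have [aa anz pr] := prim_ring fa pa.
set al := mkfi fa in aa anz pr *.
set e := dg al.
have axx u : fval al u u * fval al u u = fval al u u by rewrite -mul_xx aa.
have ee : e * e = e.
  apply: fi_ext => u v h; rewrite dgL // dgE //.
  by case: (eqVneq u v) => [_|_]; [exact: axx | exact: mulr0].
set be := e * al + (1 - e) * (1 - al).
have bxx u : fval be u u = 1.
  rewrite addE // !mul_xx !subE // oneE // ser1_xx dgE // eqxx.
  rewrite mulrBr mulr1 !mulrBl mul1r axx subrr subr0.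
  by rewrite addrC subrK.
have [g [bg gb]] := unipotent_inv bxx.
have k1 : (1 - al) * al = 0 by rewrite mulrBl mul1r aa subrr.
have k2 : e * (1 - e) = 0 by rewrite mulrBr mulr1 ee subrr.
have ba : be * al = e * al.
  by rewrite /be mulrDl -!mulrA aa k1 mulr0 addr0.
have eb : e * be = e * al.
  by rewrite /be mulrDr !mulrA ee k2 mul0r addr0.
have alE : al = g * e * be.
  by rewrite -mulrA eb -ba mulrA gb mul1r.
have [x ex] : exists x, fval al x x != 0.
  apply: NNPP => hn; move: anz; rewrite alE.
  have -> : e = 0.
    apply: fi_ext => u v h; rewrite dgE // zeroE //.
    case: (eqVneq u v) => // _.
    case: (eqVneq (fval al u u) 0) => [->|nz] //; exfalso; apply: hn; by exists u.
  by rewrite mulr0 mul0r eqxx.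
have x1 : fval al x x = 1 by apply: (mulfI ex); rewrite axx mulr1.
have [De eD] : Dl x * e = Dl x /\ e * Dl x = Dl x.
  apply: Dl_id; last by rewrite dgE // eqxx.
  by move=> u v h ne; rewrite dgE // (negbTE ne).
set ep := g * Dl x * be.
have epep : ep * ep = ep.
  by rewrite /ep !mulrA -(mulrA _ be g) bg mulr1 -(mulrA g (Dl x) (Dl x)) Dl_idem.
have epa : ep * al = ep.
  by rewrite /ep alE !mulrA -(mulrA _ be g) bg mulr1 -(mulrA g (Dl x) e) De.
have aep : al * ep = ep.
  by rewrite /ep alE !mulrA -(mulrA _ be g) bg mulr1 -(mulrA g e (Dl x)) eD.
have Dep : be * ep * g = Dl x.
  by rewrite /ep !mulrA bg mul1r -mulrA bg mulr1.
have eDl : e = Dl x.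
  case: (pr ep epep epa aep) => E.
    by move: (Dl_nz x); rewrite -Dep E mulr0 mul0r eqxx.
  by rewrite -Dep E alE !mulrA bg mul1r -mulrA bg mulr1.
exists x, (fval be), (fval g); split; first split.
- exact: fin.
- exact: fin.
- apply: ser_eq_trans (ser_eq_sym (mulE be g)) _; rewrite bg => u v h; exact: oneE.
- apply: ser_eq_trans (ser_eq_sym (mulE g be)) _; rewrite gb => u v h; exact: oneE.
apply: ser_eq_trans (ser_eq_sym (mkfiE fa)) _; rewrite -/al alE eDl.
exact: liftmul (liftmul (ser_eq_refl _) (mkfiE (delta_fin K x))) (ser_eq_refl _).
Qed.

Lemma part1_conv a (fa : finitary a) (ia : ser_eq (conv a a) a) x b binv :
  inverse_of b binv -> ser_eq a (conv (conv binv (delta K x)) b) -> fi_primitive a.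
Proof.
case=> fb fbi bbi bib E.
set B := mkfi fb; set G := mkfi fbi; set al := mkfi fa.
have BG : B * G = 1.
  apply: fi_ext; apply: ser_eq_trans (liftmul (mkfiE fb) (mkfiE fbi)) _.
  by apply: ser_eq_trans bbi _; move=> u v h; rewrite oneE.
have GB : G * B = 1.
  apply: fi_ext; apply: ser_eq_trans (liftmul (mkfiE fbi) (mkfiE fb)) _.
  by apply: ser_eq_trans bib _; move=> u v h; rewrite oneE.
have alE : al = G * Dl x * B.
  apply: fi_ext; apply: ser_eq_trans (mkfiE fa) _; apply: ser_eq_trans E _.
  apply: ser_eq_sym.
  exact: liftmul (liftmul (mkfiE fbi) (mkfiE (delta_fin K x))) (mkfiE fb).
have aa : al * al = al := idem_ring fa ia.
have Dxe : Dl x = B * al * G by rewrite alE !mulrA BG mul1r -mulrA BG mulr1.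
apply: ring_prim => //.
- apply/eqP => a0; apply: (negP (Dl_nz x)); apply/eqP.
  rewrite Dxe (_ : al = 0); [by rewrite mulr0 mul0r | exact: a0].
- move=> e ee ea ae.
  set F := B * e * G.
  have FF : F * F = F.
    by rewrite /F !mulrA -(mulrA _ G B) GB mulr1 -(mulrA B e e) ee.
  have hl : Dl x * F = F.
    by rewrite Dxe /F !mulrA -(mulrA _ G B) GB mulr1 -(mulrA B al e) ae.
  have hr : F * Dl x = F.
    by rewrite Dxe /F !mulrA -(mulrA _ G B) GB mulr1 -(mulrA B e al) ea.
  have eF : e = G * F * B by rewrite /F !mulrA GB mul1r -mulrA GB mulr1.
  case: (sandwich hl hr FF) => hF; [left | right]; rewrite eF hF ?mulr0 ?mul0r //.
Qed.

Lemma part2_dir a (fa : finitary a) : diagonal a -> fi_primitive a ->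
  exists x : P, ser_eq a (delta K x).
Proof.
move=> da pa; have [aa anz pr] := prim_ring fa pa.
set al := mkfi fa in aa anz pr *.
have axx u : fval al u u * fval al u u = fval al u u by rewrite -mul_xx aa.
have dal u v : (u <= v)%O -> u != v -> fval al u v = 0.
  by move=> h ne; rewrite (mkfiE fa h) da.
have [x ex] : exists x, fval al x x != 0.
  apply: NNPP => hn; move/eqP: anz; apply; apply: fi_ext => u v h; rewrite zeroE //.
  case: (eqVneq u v) => [<-|ne]; last exact: dal.
  case: (eqVneq (fval al u u) 0) => // nz; exfalso; apply: hn; by exists u.
have x1 : fval al x x = 1 by apply: (mulfI ex); rewrite axx mulr1.
have [Da aD] := Dl_id dal x1.
case: (pr (Dl x) (Dl_idem x) Da aD) => E.
  by move: (Dl_nz x); rewrite E eqxx.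
exists x; apply: ser_eq_trans (ser_eq_sym (mkfiE fa)) _; rewrite -/al -E.
exact: mkfiE.
Qed.

Lemma part2_conv a (fa : finitary a) x : ser_eq a (delta K x) -> fi_primitive a.
Proof.
move=> E; have alE : mkfi fa = Dl x.
  apply: fi_ext; apply: ser_eq_trans (mkfiE fa) _; apply: ser_eq_trans E _.
  exact: ser_eq_sym (mkfiE _).
apply: ring_prim; rewrite alE.
- exact: Dl_idem.
- exact: Dl_nz.
- by move=> e ee ea ae; apply: sandwich ae ea ee.
Qed.

End Main.


Theorem lemma1 (d : Order.disp_t) (P : porderType d) (K : fieldType) :
  (forall a : ser P K, fi_idempotent a ->
     (fi_primitive a <->
      exists (x : P) (b binv : ser P K),
        inverse_of b binv /\ ser_eq a (conv (conv binv (delta K x)) b)))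
  /\
  (forall a : ser P K, finitary a -> diagonal a ->
     (fi_primitive a <-> exists x : P, ser_eq a (delta K x))).
Proof.
split.
- move=> a [fa ia]; split.
  + exact (part1_dir fa).
  + case=> x [b [binv [hinv E]]]; exact (part1_conv fa ia hinv E).
- move=> a fa da; split; first exact (part2_dir fa da).
  case=> x E; exact (part2_conv fa E).
Qed.
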